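(* Let $q$ be a prime, $m\geq 3$, and let $D'$ be an abelian group of order $q^{m+1}$. Suppose that: (1) $D'$ contains at least two subgroups of order $q^{m-1}$ and one of them, say $A'$, is cyclic; (2) $A'$ contains a subgroup $A_1'$ of order $q$ such that $D'/A_1'\cong C_q\times C_{q^{m-1}}$. Then $D'$ is isomorphic to $C_q\times C_{q^m}$ or to $C_{q^2}\times C_{q^{m-1}}$. Moreover, if $m\geq 4$, or if $D'$ contains a noncyclic subgroup $W'$ of order $q^2$ such that $|W'\cap A'|=q$ and $D'/W'$ is cyclic, then $D'\cong C_q\times C_{q^m}$.
   Context: $C_n$ denotes the cyclic group of order $n$. *)

(* Defs.v *)
From mathcomp Require Import all_boot all_fingroup all_solvable all_algebra.
Set Implicit Arguments. Unset Strict Implicit. Unset Printing Implicit Defensive.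

(* The external direct product C_a x C_b of two cyclic groups, realized as
   Zp a x Zp b inside the product finGroupType 'Z_a * 'Z_b.
   (Only used with a, b >= 2 in the statement, where #|Zp a| = a.) *)
Definition CxC (a b : nat) : {group ('Z_a * 'Z_b)%type} :=
  setX_group (Zp a) (Zp b).

(* Main.v *)
Require Import Defs.
From mathcomp Require Import all_boot all_fingroup all_solvable all_algebra.
Set Implicit Arguments. Unset Strict Implicit. Unset Printing Implicit Defensive.

Lemma Zp_cyc a : 1 < a -> cyclic (Zp a).
Proof. by move=> ha; rewrite /Zp ha Zp_cycle cycle_cyclic. Qed.

Lemma CxC_dprod a b : 1 < a -> 1 < b ->
  exists H K : {group ('Z_a * 'Z_b)%type},
    [/\ (H \x K)%g = CxC a b, cyclic H, #|H| = a, cyclic K & #|K| = b].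
Proof.
move=> ha hb.
exists (setX_group (Zp_group a) 1%G), (setX_group 1%G (Zp_group b)); split.
- exact: setX_dprod.
- by rewrite -(isog_cyclic (isog_setX1 ('Z_b) (Zp_group a))) Zp_cyc.
- by rewrite -(card_isog (isog_setX1 ('Z_b) (Zp_group a))) card_Zp // ltnW.
- by rewrite -(isog_cyclic (isog_set1X ('Z_a) (Zp_group b))) Zp_cyc.
- by rewrite -(card_isog (isog_set1X ('Z_a) (Zp_group b))) card_Zp // ltnW.
Qed.

Lemma isog_CxC (gT : finGroupType) (G H K : {group gT}) a b :
  1 < a -> 1 < b -> (H \x K)%g = G -> cyclic H -> cyclic K -> #|H| = a -> #|K| = b ->
  G \isog CxC a b.
Proof.
move=> ha hb dG cH cK oH oK.
have [H' [K' [dG' cH' oH' cK' oK']]] := CxC_dprod ha hb.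
apply: (isog_dprod dG dG').
  by rewrite isog_cyclic_card // cH' oH' oH eqxx.
by rewrite isog_cyclic_card // cK' oK' oK eqxx.
Qed.

Lemma CxC_exp_card a b : 1 < a -> 1 < b ->
  exponent (CxC a b) = lcmn a b /\ #|CxC a b| = a * b.
Proof.
move=> ha hb.
have [H [K [dG cH oH cK oK]]] := CxC_dprod ha hb.
split; first by rewrite -(dprod_exponent dG) !exponent_cyclic // oH oK.
by rewrite -(dprod_card dG) oH oK.
Qed.

From mathcomp Require Import zify.

Section Main.
Local Open Scope group_scope.

Lemma main (gT : finGroupType) (D A A1 : {group gT}) (q n : nat) :
  prime q -> 2 <= n ->
  abelian D -> #|D| = (q ^ n.+2)%N ->
  A \subset D -> #|A| = (q ^ n)%N -> cyclic A ->
  A1 \subset A -> #|A1| = q ->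
  (D / A1) \isog CxC q (q ^ n) ->
  (D \isog CxC q (q ^ n.+1) \/ D \isog CxC (q ^ 2) (q ^ n)) /\
  ((4 <= n.+1 \/
    exists W : {group gT},
      [/\ W \subset D, #|W| = (q ^ 2)%N, ~~ cyclic W,
          #|W :&: A| = q & cyclic (D / W)]) ->
   D \isog CxC q (q ^ n.+1)).
Proof.
move=> qp n2 cD oD sAD oA cycA sA1A oA1 isoQ.
have q1 := prime_gt1 qp; have q0 := prime_gt0 qp.
have qn1 : 1 < q ^ n by rewrite -(expn0 q) ltn_exp2l // ltnW.
have [eC oC] := CxC_exp_card q1 qn1.
have lcmq : lcmn q (q ^ n) = (q ^ n)%N.
  by apply/lcmn_idPr; rewrite -{1}(expn1 q) dvdn_exp2l // ltnW.
have eQ : exponent (D / A1) = (q ^ n)%N by rewrite (exponent_isog isoQ) eC lcmq.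
have ncQ : ~~ cyclic (D / A1).
  rewrite (isog_cyclic isoQ); apply/negP => cC.
  have := exponent_cyclic cC; rewrite eC oC lcmq -expnS => /eqP.
  by rewrite eqn_exp2l // => /eqP; apply: n_Sn.
have [e le_e eD] : exists2 e, e <= n.+2 & exponent D = (q ^ e)%N.
  by apply/dvdn_pfactor; rewrite // -oD exponent_dvdn.
have ge_e : n <= e.
  by have := exponentS sAD; rewrite exponent_cyclic // oA eD dvdn_Pexp2l.
have [x Dx ox] := exponent_witness (abelian_nil cD).
have : e = n \/ e = n.+1 \/ e = n.+2 by clear -le_e ge_e; lia.
case=> [ee|[ee|ee]]; subst e.
- have cQ : abelian (D / A1) := quotient_abelian A1 cD.
  have [u Qu ou] := exponent_witness (abelian_nil cQ).
  case/morphimP: Qu => y Ny Dy defu.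
  have oy : #[y] = (q ^ n)%N.
    apply/eqP; rewrite eqn_dvd -{1}eD dvdn_exponent //= -eQ ou defu.
    exact: morph_order.
  have n0 : 0 < n by apply: leq_trans n2.
  pose z := y ^+ (q ^ n.-1).
  have nz : z \notin A1.
    apply/negP => A1z.
    have : u ^+ (q ^ n.-1) = 1 by rewrite defu -morphX //; exact: coset_id.
    move/eqP; rewrite -order_dvdn -ou eQ dvdn_Pexp2l //; clear -n0; lia.
  have oz : #[z] = q.
    rewrite orderXdiv; last by rewrite oy dvdn_exp2l // leq_pred.
    by rewrite oy -{1}(prednK n0) expnS mulnK // expn_gt0 q0.
  have tiAy : A :&: <[y]> = 1.
    apply/eqP; apply: contraR nz => ntC.
    have qC : q %| #|A :&: <[y]>|.
      have [k _ ok] : exists2 k, k <= n & #|A :&: <[y]>| = (q ^ k)%N.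
        by apply/dvdn_pfactor; rewrite // -oA cardSg // subsetIl.
      move: ntC; rewrite trivg_card1 ok; case: k {ok} => [|k] h.
        by rewrite expn0 eqxx in h.
      by rewrite expnS dvdn_mulr.
    have [z0 Cz0 oz0] := Cauchy qp qC.
    move: Cz0; rewrite inE => /andP [Az0 yz0].
    have e1 : A1 :==: <[z0]>.
      by rewrite (eq_subG_cyclic cycA) // ?cycle_subG // -orderE oA1 oz0.
    have e2 : <[z]> :==: <[z0]>.
      by rewrite (eq_subG_cyclic (cycle_cyclic y)) ?cycle_subG ?mem_cycle // -!orderE oz oz0.
    by rewrite (eqP e1) -(eqP e2) cycle_id.
  have oAy : #|A * <[y]>| = (q ^ n * q ^ n)%N by rewrite TI_cardMg // oA -orderE oy.
  have sAyD : A * <[y]> \subset D by rewrite mul_subG // cycle_subG.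
  have n2' : n = 2.
    have := subset_leq_card sAyD; rewrite oAy oD -expnD leq_exp2l //; clear -n2; lia.
  subst n.
  have e4 : (q ^ 2.+2 = q ^ 2 * q ^ 2)%N by rewrite -expnD.
  have defD : A * <[y]> = D by apply/eqP; rewrite eqEcard sAyD oAy oD e4 leqnn.
  have dD : A \x <[y]> = D.
    by rewrite dprodE // (sub_abelian_cent2 cD) // cycle_subG.
  have q21 : 1 < q ^ 2 by rewrite -(expn0 q) ltn_exp2l.
  have oy' : #|<[y]>| = (q ^ 2)%N by rewrite -orderE oy.
  have iso := @isog_CxC _ D A <[y]>%G _ _ q21 q21 dD cycA (cycle_cyclic y) oA oy'.
  split; first by right.
  case=> [//|[W [sWD oW ncW _ cDW]]].
  exfalso.
  have pD : q.-group D by rewrite /pgroup oD pnatX pnat_id.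
  have eW : exponent W %| q.
    have [k lek ek] : exists2 k, k <= 2 & exponent W = (q ^ k)%N.
      by apply/dvdn_pfactor; rewrite // -oW exponent_dvdn.
    have : k != 2.
      apply: contra ncW => /eqP k2; subst k.
      have [w Ww ow] := exponent_witness (abelian_nil (abelianS sWD cD)).
      have <- : <[w]> = W.
        by apply/eqP; rewrite eqEcard cycle_subG Ww -orderE -ow ek oW leqnn.
      exact: cycle_cyclic.
    move=> k2; rewrite ek -{2}(expn1 q) dvdn_exp2l //; clear -lek k2; lia.
  have [a defA] := cyclicP cycA.
  have Da : a \in D by rewrite -cycle_subG -defA.
  have oa : #[a] = (q ^ 2)%N by rewrite orderE -defA oA.
  have qq2 : q %| q ^ 2 by rewrite -{1}(expn1 q) dvdn_exp2l.
  have q2q : ((q ^ 2) %/ q)%N = q by rewrite expnS mulKn // expn1.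
  have oaq : #[a ^+ q] = q by rewrite orderXdiv oa.
  have oyq : #[y ^+ q] = q by rewrite orderXdiv oy.
  have tiq : <[a ^+ q]> :&: <[y ^+ q]> = 1.
    by apply/trivgP; rewrite -tiAy setISS // ?defA cycleX.
  have Ma : a ^+ q \in 'Mho^1(D).
    by have := Mho_p_elt 1 Da (mem_p_elt pD Da); rewrite expn1.
  have My : y ^+ q \in 'Mho^1(D).
    by have := Mho_p_elt 1 Dy (mem_p_elt pD Dy); rewrite expn1.
  have sM : <[a ^+ q]> * <[y ^+ q]> \subset 'Mho^1(D).
    by rewrite mul_subG // cycle_subG.
  have cM : (q * q <= #|'Mho^1(D)|)%N.
    by have := subset_leq_card sM; rewrite TI_cardMg // -!orderE oaq oyq.
  have cO : (#|'Ohm_1(D)| <= q * q)%N.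
    have h := mul_card_Ohm_Mho_abelian 1 cD; rewrite oD in h.
    have qq0 : 0 < q * q by rewrite muln_gt0 q0.
    rewrite -(leq_pmul2r qq0); apply: (leq_trans (leq_mul (leqnn _) cM)).
    by rewrite h !expnS expn0 muln1 !mulnA.
  have sWO : W \subset 'Ohm_1(D).
    rewrite (OhmE 1 pD) expn1; apply: subset_trans (subset_gen _).
    apply/subsetP => w Ww; apply/LdivP; split; first exact: (subsetP sWD).
    exact: (exponentP eW).
  have eWO : W :=: 'Ohm_1(D).
    by apply/eqP; rewrite eqEcard sWO oW (leq_trans cO) // expnS expn1.
  have Wq : forall g, g \in D -> g ^+ q \in W.
    move=> g Dg; rewrite eWO (OhmE 1 pD) expn1; apply: mem_gen.
    apply/LdivP; split; first by rewrite groupX.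
    rewrite -expgM; apply/eqP; rewrite -order_dvdn.
    by apply: dvdn_trans (dvdn_exponent Dg) _; rewrite eD expnS expn1.
  have nWD : D \subset 'N(W) := sub_abelian_norm cD sWD.
  have oDW : #|D / W| = (q ^ 2)%N.
    rewrite card_quotient // -divgS // oD oW (_ : 2.+2 = 2 + 2)%N //.
    by rewrite expnD mulnK // expn_gt0 q0.
  have : exponent (D / W) %| q.
    apply/exponentP => v; case/morphimP => g Ng Dg ->.
    rewrite -morphX //; exact: coset_id (Wq g Dg).
  by rewrite exponent_cyclic // oDW -{2}(expn1 q) dvdn_Pexp2l.
- case/splitsP: (abelian_splits Dx (esym ox) cD) => K /complP [tiK defD].
  have sKD : K \subset D by rewrite -defD mulG_subr.
  have dD : <[x]> \x K = D.
    by rewrite dprodE // (sub_abelian_cent2 cD) // cycle_subG.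
  have oK : #|K| = q.
    have := dprod_card dD; rewrite -orderE -ox eD oD => h.
    have qp1 : 0 < q ^ n.+1 by rewrite expn_gt0 q0.
    by apply/eqP; rewrite -(eqn_pmul2l qp1) h -expnSr.
  have qn1' : 1 < q ^ n.+1 by rewrite -(expn0 q) ltn_exp2l.
  have dD' : K \x <[x]> = D by rewrite dprodC.
  have cK : cyclic K by apply: prime_cyclic; rewrite oK.
  have ox' : #|<[x]>| = (q ^ n.+1)%N by rewrite -orderE -ox eD.
  have iso := @isog_CxC _ D K <[x]>%G q (q ^ n.+1) q1 qn1' dD' cK (cycle_cyclic x) oK ox'.
  by split; [left | move=> _].
- have cycD : cyclic D.
    have <- : <[x]> = D.
      by apply/eqP; rewrite eqEcard cycle_subG Dx -orderE -ox eD oD leqnn.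
    exact: cycle_cyclic.
  by rewrite quotient_cyclic in ncQ.
Qed.
End Main.
Theorem lemma6p1 (gT : finGroupType) (D A A1 : {group gT}) (q m : nat) :
  prime q -> 3 <= m ->
  abelian D -> #|D| = q ^ m.+1 ->
  (* (1) at least two subgroups of order q^(m-1), one of which is A, cyclic *)
  A \subset D -> #|A| = q ^ m.-1 -> cyclic A ->
  (exists B : {group gT}, [/\ B \subset D, #|B| = q ^ m.-1 & B != A]) ->
  (* (2) A1 <= A of order q with D/A1 isomorphic to C_q x C_{q^(m-1)} *)
  A1 \subset A -> #|A1| = q ->
  (D / A1)%g \isog CxC q (q ^ m.-1) ->
  (D \isog CxC q (q ^ m) \/ D \isog CxC (q ^ 2) (q ^ m.-1)) /\
  ((4 <= m \/
    exists W : {group gT},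
      [/\ W \subset D, #|W| = q ^ 2, ~~ cyclic W,
          #|W :&: A| = q & cyclic (D / W)%g]) ->
   D \isog CxC q (q ^ m)).
Proof.
move=> qp m3 cD oD sAD oA cycA _ sA1A oA1 iso.
case: m m3 oD oA iso => [|n] // m3 oD oA iso.
have n2 : 2 <= n by rewrite -ltnS.
exact: (main qp n2 cD oD sAD oA cycA sA1A oA1 iso).
Qed.
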